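(* Let $d\ge 2$. There are a constant $C>0$ and $n_0(d)$ depending only on $d$ such that for all $n\ge n_0(d)$: if $\mathcal{F}$, $B_i$ are as in the context, $J\subseteq[n]$ with $|J|\le n/4$, and $K\ge 0$ is a real number with $|E(\mathcal{G}_J)|\ge\binom{n-|J|}{d}-Kn$, then $$|\mathcal{T}_J^4\cup\mathcal{T}_J^5|\le(|J|-1)\binom{n-|J|}{d-1}+CK.$$
   Context: Let $\mathcal{F}=\{F_1,\dots,F_m\}\subseteq\binom{[n]}{d+1}$ consist of distinct sets and have VC-dimension at most $d$ (no $(d+1)$-set $S$ is shattered, i.e. no $S$ such that every $A\subseteq S$ equals $F\cap S$ for some $F\in\mathcal{F}$). For $i\in[m]$, call $B\subsetneq F_i$ admissible for $F_i$ if $F\cap F_i\neq B$ for every $F\in\mathcal{F}$. For each $i$, $B_i$ is a fixed admissible set for $F_i$ of maximum cardinality among all admissible sets. For $J\subseteq[n]$, $\mathcal{G}_J$ is the $d$-uniform hypergraph on vertex set $[n]\setminus J$ with edge set $E(\mathcal{G}_J):=\{F_k\setminus J: k\in[m],\ |F_k\cap J|=1\}$. $\mathcal{T}_J^4$ is the set of $F_k\in\mathcal{F}$ with $|F_k\cap J|=1$, $|B_k|=d$ and $|B_k\cap J|=1$; $\mathcal{T}_J^5$ is the set of $F_k\in\mathcal{F}$ with $|F_k\cap J|=2$ and $F_k\setminus J\subseteq B_k$. *)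

(* Defs.v *)
From HB Require Import structures.
From mathcomp Require Import all_boot all_order all_algebra.
From mathcomp Require Import reals.
Set Implicit Arguments. Unset Strict Implicit. Unset Printing Implicit Defensive.

(* Ground set [n] is 'I_n; a set system is fam : {set {set 'I_n}}
   (distinct sets, so indexing F_i by the set itself is harmless). *)

Definition shattered (n : nat) (fam : {set {set 'I_n}}) (S : {set 'I_n}) : bool :=
  [forall A : {set 'I_n}, (A \subset S) ==> [exists F in fam, F :&: S == A]].

Definition vc_dim_le (n : nat) (fam : {set {set 'I_n}}) (d : nat) : Prop :=
  forall S : {set 'I_n}, #|S| = d.+1 -> ~~ shattered fam S.

Definition admissible (n : nat) (fam : {set {set 'I_n}}) (Fi B : {set 'I_n}) : bool :=
  (B \proper Fi) && [forall F in fam, F :&: Fi != B].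

Definition max_admissible (n : nat) (fam : {set {set 'I_n}}) (Fi B : {set 'I_n}) : Prop :=
  admissible fam Fi B /\ forall B', admissible fam Fi B' -> #|B'| <= #|B|.

Definition EG (n : nat) (fam : {set {set 'I_n}}) (J : {set 'I_n}) : {set {set 'I_n}} :=
  [set F :\: J | F in fam & #|F :&: J| == 1].

Definition T4 (n d : nat) (fam : {set {set 'I_n}}) (B : {set 'I_n} -> {set 'I_n})
    (J : {set 'I_n}) : {set {set 'I_n}} :=
  [set F in fam | [&& #|F :&: J| == 1, #|B F| == d & #|B F :&: J| == 1]].

Definition T5 (n : nat) (fam : {set {set 'I_n}}) (B : {set 'I_n} -> {set 'I_n})
    (J : {set 'I_n}) : {set {set 'I_n}} :=
  [set F in fam | (#|F :&: J| == 2) && (F :\: J \subset B F)].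

(* Main.v *)
Require Import Defs.
From HB Require Import structures.
From mathcomp Require Import all_boot all_order all_algebra.
From mathcomp Require Import reals zify lra.
Import Order.TTheory GRing.Theory Num.Theory.
Set Implicit Arguments. Unset Strict Implicit. Unset Printing Implicit Defensive.

Section Gen.
Variable T0 : finType.
Implicit Types (E : {set {set T0}}) (W e : {set T0}).

Lemma GL1 E W c : c \in W ->
  (forall e, e \in E -> [/\ e \subset W, #|e| = 2 & c \in e]) -> #|E| < #|W|.
Proof.
move=> cW HE.
have inj : {in E &, injective (fun e => e :\ c)}.
  move=> e1 e2 /HE[_ _ c1] /HE[_ _ c2] eq.
  by rewrite -(setD1K c1) -(setD1K c2) eq.
rewrite -(card_in_imset inj).
apply: (@leq_ltn_trans #|[set A : {set T0} | A \subset W :\ c & #|A| == 1]|).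
  apply: subset_leq_card; apply/subsetP => A /imsetP[e eE ->].
  have [eW ce2 ce] := HE e eE.
  rewrite inE; apply/andP; split; first by apply: setSD.
  by move: ce2; rewrite (cardsD1 c) ce add1n => -[->].
by rewrite cards_draws bin1 (cardsD1 c W) cW add1n.
Qed.

Lemma two_same e x u v : #|e| = 2 -> x \in e -> u \in e -> v \in e ->
  u != x -> v != x -> u = v.
Proof.
move=> /eqP/cards2P[p [q [pq ->]]]; rewrite !in_set2.
by move=> /orP[]/eqP-> /orP[]/eqP-> /orP[]/eqP->; rewrite ?eqxx // eq_sym ?(negbTE pq).
Qed.

Lemma GL2 E W :
  (forall e, e \in E -> e \subset W /\ #|e| = 2) ->
  (forall e e', e \in E -> e' \in E -> e :&: e' != set0) -> #|E| <= #|W|.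
Proof.
move=> HE Hint.
have [/eqP->|/set0Pn[e0 e0E]] := boolP (E == set0); first by rewrite cards0.
have [e0W /eqP/cards2P[a [b [ab e0def]]]] := HE e0 e0E.
have aW : a \in W by apply: (subsetP e0W); rewrite e0def !inE eqxx.
have bW : b \in W by apply: (subsetP e0W); rewrite e0def !inE eqxx orbT.
have [allA|] := boolP [forall e in E, a \in e].
  apply: ltnW; apply: (GL1 aW) => e eE; have [? ?] := HE e eE; split => //.
  exact: (forall_inP allA).
move/forall_inPn => [e1 e1E ae1].
have [allB|] := boolP [forall e in E, b \in e].
  apply: ltnW; apply: (GL1 bW) => e eE; have [? ?] := HE e eE; split => //.
  exact: (forall_inP allB).
move/forall_inPn => [e2 e2E be2].
have [e1W e1c] := HE e1 e1E; have [e2W e2c] := HE e2 e2E.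
have be1 : b \in e1.
  have /set0Pn[x] := Hint _ _ e1E e0E; rewrite inE e0def !inE => /andP[xe1 /orP[]/eqP xv].
    by rewrite -xv xe1 in ae1.
  by rewrite -xv.
have ae2 : a \in e2.
  have /set0Pn[x] := Hint _ _ e2E e0E; rewrite inE e0def !inE => /andP[xe2 /orP[]/eqP xv].
    by rewrite -xv.
  by rewrite -xv xe2 in be2.
have /set0Pn[z] := Hint _ _ e1E e2E; rewrite inE => /andP[ze1 ze2].
have za : z != a by apply: contraNneq ae1 => <-.
have zb : z != b by apply: contraNneq be2 => <-.
have zW : z \in W by apply: (subsetP e1W).
have sub : E \subset [set A : {set T0} | A \subset [set a; b; z] & #|A| == 2].
  apply/subsetP => e eE; have [eW ec] := HE e eE.
  rewrite inE ec eqxx andbT; apply/subsetP => x xe.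
  apply/negPn/negP => xT.
  have /set0Pn[u0] := Hint _ _ eE e0E; rewrite inE => /andP[u0e u0e0].
  have /set0Pn[u1] := Hint _ _ eE e1E; rewrite inE => /andP[u1e u1e1].
  have /set0Pn[u2] := Hint _ _ eE e2E; rewrite inE => /andP[u2e u2e2].
  have u0x : u0 != x by apply: contraNneq xT => <-; move: u0e0; rewrite e0def !inE => /orP[]->; rewrite ?orbT.
  have u1bz : (u1 == b) || (u1 == z).
    case: (eqVneq u1 b) => //= u1b; apply/eqP; apply: (two_same e1c be1 u1e1 ze1) => //.
  have u2az : (u2 == a) || (u2 == z).
    case: (eqVneq u2 a) => //= u2a; apply/eqP; apply: (two_same e2c ae2 u2e2 ze2) => //.
  have u1x : u1 != x by apply: contraNneq xT => <-; move: u1bz => /orP[]/eqP->; rewrite !inE eqxx ?orbT.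
  have u2x : u2 != x by apply: contraNneq xT => <-; move: u2az => /orP[]/eqP->; rewrite !inE eqxx ?orbT.
  have e01 := two_same ec xe u0e u1e u0x u1x.
  have e02 := two_same ec xe u0e u2e u0x u2x.
  move: u0e0 u1bz u2az; rewrite e0def -e01 -e02 !inE.
  move=> /orP[]/eqP->; rewrite ?eqxx ?(negbTE ab) ?(eq_sym a z) ?(eq_sym b z) ?(negbTE za) ?(negbTE zb) //=.
  by rewrite eq_sym (negbTE ab).
have c3 : #|[set a; b; z]| = 3.
  by rewrite setUC cardsU1 cards2 !inE ab (negbTE za) (negbTE zb).
have : [set a; b; z] \subset W by apply/subsetP => x; rewrite !inE => /orP[/orP[]|]/eqP-> //.
move/subset_leq_card; rewrite c3 => h3.
by apply: (leq_trans (subset_leq_card sub)); rewrite cards_draws c3.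
Qed.
End Gen.


Section Main.
Variables (n d : nat) (fam : {set {set 'I_n}}) (B : {set 'I_n} -> {set 'I_n}) (J : {set 'I_n}).
Hypothesis d2 : 2 <= d.
Hypothesis famc : forall F, F \in fam -> #|F| = d.+1.
Hypothesis Badm : forall F, F \in fam -> max_admissible fam F (B F).

Lemma BsubF F : F \in fam -> B F \subset F.
Proof. by move/Badm => [/andP[/properP[]]]. Qed.

Lemma BproperF F : F \in fam -> B F \proper F.
Proof. by move/Badm => [/andP[]]. Qed.

Lemma notrace F G : F \in fam -> G \in fam -> G :&: F != B F.
Proof. by move=> /Badm[/andP[_ /forall_inP H] _] /H. Qed.

Lemma Uniq F G : F \in fam -> #|B F| = d -> G \in fam -> B F \subset G -> G = F.
Proof.
move=> Ff BFd Gf BG; apply/eqP/negPn/negP => GF.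
have BGF : B F \subset G :&: F by rewrite subsetI BG BsubF.
have : G :&: F != F.
  apply: contraNneq GF => GFF; rewrite eq_sym eqEcard.
  have FG : F \subset G by rewrite -GFF subsetIl.
  by rewrite FG (famc Ff) /= (famc Gf).
move=> GFF.
have lt : #|G :&: F| < #|F|.
  by apply: proper_card; rewrite properEneq GFF subsetIr.
have /eqP E : B F == G :&: F.
  by rewrite eqEcard BGF BFd -ltnS -(famc Ff).
by move: (notrace Ff Gf); rewrite E eqxx.
Qed.


Definition TT := T4 d fam B J :|: T5 fam B J.
Definition sig F := B F :\: J.
Definition Sall := [set S : {set 'I_n} | (S \subset ~: J) && (#|S| == d.-1)].
Definition Pset (S : {set 'I_n}) := [set y | (y \notin J) && (y \notin S) && (y |: S \in EG fam J)].
Definition XS (S : {set 'I_n}) := [set F in TT | sig F == S].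

Lemma TTfam F : F \in TT -> F \in fam.
Proof. by rewrite !inE => /orP[]/andP[]. Qed.

Lemma T5facts F : F \in T5 fam B J ->
  [/\ F \in fam, #|F :&: J| = 2 & F :\: J = B F :\: J].
Proof.
rewrite inE => /andP[Ff /andP[/eqP c2 sub]]; split => //.
apply/eqP; rewrite eqEsubset (setSD J (BsubF Ff)) andbT.
apply/subsetP => x xFJ; have := subsetP sub x xFJ.
by move: xFJ; rewrite !inE => /andP[-> _] ->.
Qed.

Lemma sig_Sall F : F \in TT -> sig F \in Sall.
Proof.
move=> FT; rewrite inE /sig; apply/andP; split.
  by apply/subsetP => x; rewrite !inE => /andP[].
move: FT; rewrite inE => /orP[].
  rewrite inE => /andP[Ff /and3P[_ /eqP BFd /eqP BJ]].
  by have := cardsID J (B F); rewrite BJ BFd => <-.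
move=> /T5facts[Ff c2 <-]; rewrite cardsD c2 famc //.
by case: d d2 => [|[|d']].
Qed.


Lemma EGP D : D \in EG fam J -> exists2 G, G \in fam & #|G :&: J| = 1 /\ D = G :\: J.
Proof. by move=> /imsetP[G]; rewrite inE => /andP[Gf /eqP c1] ->; exists G. Qed.

Section Per.
Variables (S : {set 'I_n}) (j0 : 'I_n).
Hypothesis SS : S \in Sall.

Definition D4 := XS S :&: [set F | #|B F| == d].
Definition D5 := XS S :\: [set F | #|B F| == d].
Definition phi F := odflt j0 [pick x in B F :&: J].
Definition W := J :\: phi @: D4.

Lemma Sfacts : S \subset ~: J /\ #|S| = d.-1.
Proof. by move: SS; rewrite inE => /andP[? /eqP]. Qed.

Lemma XSfacts F : F \in XS S -> F \in TT /\ B F :\: J = S.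
Proof. by rewrite inE => /andP[? /eqP]. Qed.

Lemma D4facts F : F \in D4 -> [/\ F \in fam, #|B F| = d, phi F \in J & B F = phi F |: S].
Proof.
rewrite inE => /andP[/XSfacts[FT BS]]; rewrite inE => /eqP BFd.
have Ff := TTfam FT; have [_ Sc] := Sfacts.
have c1 : #|B F :&: J| == 1.
  have := cardsID J (B F); rewrite BS BFd Sc.
  by move=> h; apply/eqP; lia.
move/cards1P: c1 => [x Ex].
have px : phi F = x.
  rewrite /phi; case: pickP => [y|]; first by rewrite Ex inE => /eqP.
  by move/(_ x); rewrite Ex inE eqxx.
have xJ : x \in J.
  have : x \in B F :&: J by rewrite Ex inE.
  by rewrite inE => /andP[].
split => //; first by rewrite px.
by rewrite -(setID (B F) J) Ex BS px.
Qed.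


Lemma phi_inj : {in D4 &, injective phi}.
Proof.
move=> F1 F2 /D4facts[F1f c1 _ B1] /D4facts[F2f c2 _ B2] eq.
apply/esym; apply: (Uniq F1f c1 F2f); rewrite B1 eq -B2; exact: BsubF.
Qed.

Lemma cardW : #|W| + #|D4| = #|J|.
Proof.
rewrite /W cardsD -(card_in_imset phi_inj).
have -> : J :&: phi @: D4 = phi @: D4.
  apply/setIidPr/subsetP => x /imsetP[F /D4facts[_ _ ? _] ->] //.
rewrite subnK //; apply: subset_leq_card.
by apply/subsetP => x /imsetP[F /D4facts[_ _ ? _] ->].
Qed.

Lemma D5facts F : F \in D5 ->
  [/\ F \in fam, #|F :&: J| = 2, F :\: J = S, #|B F| != d & B F = S].
Proof.
rewrite inE => /andP[]; rewrite inE => BFd /XSfacts[FT BS].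
have Ff := TTfam FT.
have FT5 : F \in T5 fam B J.
  move: FT; rewrite inE => /orP[] //; rewrite inE => /andP[_ /and3P[_ BFd' _]].
  by rewrite BFd' in BFd.
have [_ c2 FBJ] := T5facts FT5.
have [_ Sc] := Sfacts.
have sub : B F :&: J \subset F :&: J by apply: setSI; exact: BsubF.
have hk : #|B F :&: J| <= 2 by rewrite -c2; exact: subset_leq_card.
have hk1 : #|B F :&: J| != 1.
  apply: contraNneq BFd => h; rewrite -(cardsID J (B F)) h BS Sc.
  by apply/eqP; lia.
have hk2 : #|B F :&: J| != 2.
  apply/negP => /eqP h.
  have /eqP e : B F :&: J == F :&: J by rewrite eqEcard sub c2 h.
  have : B F = F by rewrite -[RHS](setID F J) -[LHS](setID (B F) J) e FBJ.
  by move/eqP; apply/negP; apply: proper_neq; apply: BproperF.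
have /eqP h0 : #|B F :&: J| == 0 by move: hk hk1 hk2; case: #|_| => [|[|[|]]].
move/cards0_eq: h0 => h0.
split => //; first by rewrite FBJ.
by rewrite -(setID (B F) J) h0 set0U.
Qed.

Lemma D5_meet F G : F \in D5 -> G \in fam -> S \subset G -> G :&: (F :&: J) != set0.
Proof.
move=> /D5facts[Ff _ FJ _ BFS] Gf SG; apply/negP => /eqP h.
have : G :&: F = S.
  apply/setP => x; apply/idP/idP.
  - rewrite !inE => /andP[xG xF]; rewrite -FJ inE xF andbT.
    apply/negP => xJ; have : x \in G :&: (F :&: J) by rewrite !inE xG xF xJ.
    by rewrite h inE.
  - move=> xS; rewrite inE (subsetP SG) //=.
    by move: xS; rewrite -FJ inE => /andP[].
by move=> e; move: (notrace Ff Gf); rewrite e BFS eqxx.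
Qed.

Lemma D5_W F x : F \in D5 -> x \in F :&: J -> x \in W.
Proof.
move=> FD5 xFJ; have [Ff _ FJ BFd _] := D5facts FD5.
move: xFJ; rewrite inE => /andP[xF xJ].
rewrite inE xJ andbT; apply/negP => /imsetP[F' F'D4 ex].
have [F'f c' _ B'] := D4facts F'D4.
have sub : B F' \subset F.
  rewrite B' -ex; apply/subsetP => y; rewrite !inE => /orP[/eqP->//|yS].
  by move: yS; rewrite -FJ inE => /andP[].
have eF := Uniq F'f c' Ff sub.
by move: BFd; rewrite eF c' eqxx.
Qed.


Lemma Pset_G y : y \in Pset S -> exists G, exists c,
  [/\ G \in fam, G :&: J = [set c], y |: S = G :\: J, S \subset G & y \notin S].
Proof.
rewrite inE => /andP[/andP[yJ yS] /EGP[G Gf [/eqP/cards1P[c Gc] e]]].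
exists G, c; split => //.
apply/subsetP => x xS; have : x \in y |: S by rewrite !inE xS orbT.
by rewrite e inE => /andP[].
Qed.

Lemma injD5 : {in D5 &, injective (fun F => F :&: J)}.
Proof.
move=> F1 F2 /D5facts[_ _ e1 _ _] /D5facts[_ _ e2 _ _] /= e.
by rewrite -(setID F1 J) -(setID F2 J) e e1 e2.
Qed.

Lemma EW e : e \in (fun F => F :&: J) @: D5 -> e \subset W /\ #|e| = 2.
Proof.
move=> /imsetP[F FD5 ->]; split; last by have [] := D5facts FD5.
by apply/subsetP => x; apply: D5_W.
Qed.

Lemma perS : #|XS S| + 1 <= #|J| + (#|Pset S| <= #|J|).
Proof.
have eX : #|XS S| = #|D4| + #|D5| by rewrite /D4 /D5 cardsID.
have cW := cardW.
have cE : #|(fun F => F :&: J) @: D5| = #|D5| := card_in_imset injD5.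
case: (leqP #|Pset S| #|J|) => hP /=.
  have : #|D5| <= #|W|.
    rewrite -cE; apply: GL2; first exact: EW.
    move=> e e' /imsetP[F FD5 ->] /imsetP[F' F'D5 ->].
    have [F'f _ F'J _ _] := D5facts F'D5.
    have SF' : S \subset F' by rewrite -F'J subsetDl.
    have /set0Pn[x] := D5_meet FD5 F'f SF'.
    rewrite !inE => /and3P[xF' xF xJ]; apply/set0Pn; exists x.
    by rewrite !inE xF' xF xJ.
  move=> h; rewrite eX -cW. rewrite leq_add2r [X in _ <= X]addnC leq_add2l. exact h.
have [/eqP D5e | /set0Pn[F0 F0D5]] := boolP (D5 == set0).
  rewrite eX D5e cards0 addn0 addn1.
  rewrite ltnNge; apply/negP => hJ.
  have W0 : W = set0. apply: cards0_eq. move: cW hJ. set w := #|W|. set x4 := #|D4|. set xj := #|J|. lia.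
  have : #|Pset S| <= #|D4|.
    have hinj : {in Pset S &, injective (fun y => y |: S)}.
      move=> y1 y2 /Pset_G[G1 [c1 [_ _ _ _ y1S]]] /Pset_G[G2 [c2 [_ _ _ _ y2S]]] /= e.
      have : y1 \in y2 |: S by rewrite -e !inE eqxx.
      by rewrite !inE (negbTE y1S) orbF => /eqP.
    rewrite -(card_in_imset hinj).
    apply: (leq_trans _ (leq_imset_card (fun F => F :\: J) D4)).
    apply: subset_leq_card; apply/subsetP => D /imsetP[y yP ->].
    have [G [c [Gf Gc e SG _]]] := Pset_G yP.
    have cJ : c \in J.
      have : c \in G :&: J by rewrite Gc inE.
      by rewrite inE => /andP[].
    have : c \in phi @: D4.
      apply/negPn/negP => cn; have : c \in W by rewrite inE cn cJ.
      by rewrite W0 inE.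
    move=> /imsetP[F' F'D4 ce]; have [F'f c' _ B'] := D4facts F'D4.
    have sub : B F' \subset G.
      rewrite B' -ce; apply/subsetP => x; rewrite !inE => /orP[/eqP->|xS].
        have : c \in G :&: J by rewrite Gc inE.
        by rewrite inE => /andP[].
      exact: (subsetP SG).
    have eG := Uniq F'f c' Gf sub.
    by apply/imsetP; exists F' => //; rewrite e eG.
  move=> ?; lia.
have : 0 < #|Pset S| by lia.
rewrite card_gt0 => /set0Pn[y yP].
have [G [c [Gf Gc _ SG _]]] := Pset_G yP.
have cF : forall F, F \in D5 -> c \in F :&: J.
  move=> F FD5; have /set0Pn[x] := D5_meet FD5 Gf SG.
  rewrite inE => /andP[xG xFJ].
  have : x \in G :&: J by rewrite inE xG; move: xFJ; rewrite inE => /andP[].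
  by rewrite Gc inE => /eqP <-.
have cW' : c \in W by apply: (D5_W F0D5); apply: cF.
have : #|D5| < #|W|.
  rewrite -cE; apply: (GL1 cW') => e eE; have [h1 h2] := EW eE.
  move: eE h1 h2 => /imsetP[F FD5 ->] h1 h2; split => //; exact: cF.
move=> h; rewrite eX -cW addn0; move: h; set w := #|W|; set x5 := #|D5|; set x4 := #|D4|; lia.
Qed.

End Per.

Definition Miss := [set D : {set 'I_n} | (D \subset ~: J) && (#|D| == d) && (D \notin EG fam J)].
Definition badS (S : {set 'I_n}) : nat := (#|Pset S| <= #|J|).

Lemma cardCJ : #|~: J| = n - #|J|.
Proof. move: (cardsC J); rewrite card_ord; move: #|J| #|~: J| => a b h; rewrite -h; lia. Qed.

Lemma G1 : #|TT| = \sum_(S in Sall) #|XS S|.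
Proof.
rewrite -sum1_card (partition_big sig (mem Sall)) /=; last first.
  by move=> F FT; apply: sig_Sall.
apply: eq_bigr => S _; rewrite -sum1_card; apply: eq_bigl => F.
by rewrite /XS inE.
Qed.

Lemma G2 (j0 : 'I_n) : #|TT| + #|Sall| <= #|Sall| * #|J| + \sum_(S in Sall) badS S.
Proof.
have e1 : #|Sall| = \sum_(S in Sall) 1 by rewrite sum1_card.
have e2 : #|Sall| * #|J| = \sum_(S in Sall) #|J| by rewrite sum_nat_const.
rewrite G1 e2 e1 -!big_split /=.
by apply: leq_sum => S SS; apply: (perS j0 SS).
Qed.

Lemma G3 S : S \in Sall ->
  badS S * (n - #|J| - d.-1 - #|J|) <= #|[set D in Miss | S \subset D]|.
Proof.
move=> SS; move: (SS); rewrite inE => /andP[SJ /eqP Sc].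
pose Y := [set y | (y \notin J) && (y \notin S) && (y |: S \notin EG fam J)].
have cY : #|Y| + #|Pset S| = n - #|J| - d.-1.
  have cD : #|~: J :\: S| = n - #|J| - d.-1 by rewrite cardsD (setIidPr SJ) cardCJ Sc.
  rewrite -cD.
  rewrite -(cardsID [set y | y |: S \in EG fam J] (~: J :\: S)) addnC.
  congr (_ + _); apply: eq_card => y; rewrite !inE.
    by case: (y \in J); case: (y \in S); case: (y |: S \in EG fam J).
  by case: (y \in J); case: (y \in S); case: (y |: S \in EG fam J).
have hinj : {in Y &, injective (fun y => y |: S)}.
  move=> y1 y2; rewrite !inE => /andP[/andP[_ y1S] _] _ /= e.
  have : y1 \in y2 |: S by rewrite -e !inE eqxx.
  by rewrite !inE (negbTE y1S) orbF => /eqP.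
have : #|Y| <= #|[set D in Miss | S \subset D]|.
  rewrite -(card_in_imset hinj); apply: subset_leq_card.
  apply/subsetP => D /imsetP[y]; rewrite !inE => /andP[/andP[yJ yS] yE] ->.
  rewrite yE subsetUr andbT andbT; apply/andP; split.
    by apply/subsetP => x; rewrite !inE => /orP[/eqP->|/(subsetP SJ)]; rewrite ?inE.
  rewrite cardsU1 yS Sc; apply/eqP; lia.
rewrite /badS; case: (leqP #|Pset S| #|J|) => h; last by rewrite mul0n.
move: cY; rewrite mul1n; set a := #|Y|; set p := #|Pset S|; set m := #|[set D in Miss | _]|.
move: h; set jj := #|J|; lia.
Qed.


Lemma sumb (T0 : finType) (A : {pred T0}) (P : pred T0) :
  \sum_(x in A) (P x : nat) = #|[set x in A | P x]|.
Proof.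
rewrite -sum1_card big_mkcond [RHS]big_mkcond /=; apply: eq_bigr => x _.
by rewrite inE; case: (x \in A); case: (P x).
Qed.

Lemma G4 : \sum_(S in Sall) #|[set D in Miss | S \subset D]| = #|Miss| * d.
Proof.
transitivity (\sum_(S in Sall) \sum_(D in Miss) (S \subset D : nat)).
  by apply: eq_bigr => S _; rewrite sumb.
rewrite exchange_big /= -sum_nat_const; apply: eq_bigr => D; rewrite inE.
move=> /andP[/andP[DJ /eqP Dc] _]; rewrite sumb.
have -> : [set x in Sall | x \subset D] = [set A : {set 'I_n} | A \subset D & #|A| == d.-1].
  apply/setP => S; rewrite !inE; case h: (S \subset D); rewrite ?andbF //=.
  by rewrite (subset_trans h DJ) andbT.
rewrite cards_draws Dc -subn1 bin_sub ?bin1 //; lia.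
Qed.

Definition Dall := [set D : {set 'I_n} | D \subset ~: J & #|D| == d].

Lemma EGsub : EG fam J \subset Dall.
Proof.
apply/subsetP => D /EGP[G Gf [c1 ->]]; rewrite inE; apply/andP; split.
  by apply/subsetP => x; rewrite !inE => /andP[].
by rewrite cardsD c1 /= (famc Gf) subn1.
Qed.

Lemma G5 : #|Miss| + #|EG fam J| = 'C(n - #|J|, d).
Proof.
have -> : 'C(n - #|J|, d) = #|Dall| by rewrite cards_draws cardCJ.
rewrite -(cardsID (EG fam J) Dall) (setIidPr EGsub) addnC; congr (_ + _).
apply: eq_card => D; rewrite !inE.
by case: (D \in EG fam J); rewrite ?andbF ?andbT.
Qed.

Lemma G6 : #|Sall| = 'C(n - #|J|, d.-1).
Proof. by rewrite cards_draws cardCJ. Qed.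

End Main.

Unset Implicit Arguments. Set Strict Implicit. Set Printing Implicit Defensive.
Local Open Scope ring_scope.

Theorem claim3p10 (R : realType) (d : nat) : (2 <= d)%N ->
  exists C : R, 0 < C /\ exists n0 : nat, forall n : nat, (n0 <= n)%N ->
  forall (fam : {set {set 'I_n}}) (B : {set 'I_n} -> {set 'I_n})
         (J : {set 'I_n}) (K : R),
    (forall F, F \in fam -> #|F| = d.+1) ->
    vc_dim_le fam d ->
    (forall F, F \in fam -> max_admissible fam F (B F)) ->
    (4 * #|J| <= n)%N ->
    0 <= K ->
    ('C(n - #|J|, d)%:R - K * n%:R <= #|EG fam J|%:R) ->
    #|T4 d fam B J :|: T5 fam B J|%:R
      <= (#|J|%:R - 1) * 'C(n - #|J|, d.-1)%:R + C * K.
Proof.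
move=> d2; exists (4 * d)%:R; split; first by rewrite ltr0n; lia.
exists (4 * d)%N => n hn fam B J K famc _ Badm hJ K0 hEG.
have n0 : (0 < n)%N by lia.
have h2 := G2 J d2 famc Badm (Ordinal n0).
set b := \sum_(S in Sall d J) badS fam J S in h2.
have h3 : (b * (n - #|J| - d.-1 - #|J|) <= #|Miss d fam J| * d)%N.
  rewrite big_distrl /= -(G4 fam J d2); apply: leq_sum => S SS; exact: G3.
have h5 := G5 J d2 famc.
rewrite (G6 J d2) in h2.
have hN : (n <= 4 * (n - #|J| - d.-1 - #|J|))%N by lia.
have h3' : (b * n <= 4 * d * #|Miss d fam J|)%N.
  apply: (leq_trans (leq_mul (leqnn b) hN)).
  by rewrite mulnCA -mulnA leq_mul2l [(d * _)%N]mulnC h3 orbT.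
clear h3; move: h2 h3' h5 hEG; rewrite /TT.
set t := #|T4 d fam B J :|: T5 fam B J|; set s := 'C(n - #|J|, d.-1).
set c := 'C(n - #|J|, d); set m := #|Miss d fam J|; set e := #|EG fam J|; set j := #|J|.
move=> h2 h3 h5 hEG.
have H2 : t%:R + s%:R <= s%:R * j%:R + b%:R :> R by rewrite -natrM -!natrD ler_nat.
have H3 : b%:R * n%:R <= (4 * d)%:R * m%:R :> R by rewrite -!natrM ler_nat.
have H5 : m%:R + e%:R = c%:R :> R by rewrite -natrD h5.
have HM : m%:R <= K * n%:R :> R by lra.
have nR : 0 < n%:R :> R by rewrite ltr0n.
have Hb : b%:R <= (4 * d)%:R * K :> R.
  rewrite -(ler_pM2r nR) -mulrA; apply: (le_trans H3); apply: ler_wpM2l => //.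
rewrite mulrBl mul1r [j%:R * _]mulrC; lra.
Qed.
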